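(* Let $(a_0,\ldots,a_n)$ be a finite sequence of positive integers and $m\ge 1$ an integer. Then $\lim_{N\to\infty}\Phi(\beta^N)=\infty$.
   Context: For positive integers $d_0,d_1,\ldots$, $[d_0,d_1,d_2,\ldots]$ denotes the continued fraction $\cfrac{1}{d_0+\cfrac{1}{d_1+\cfrac{1}{d_2+\cdots}}}$, and for $\beta=[d_0,d_1,\ldots]$ we write $\alpha_j(\beta)=[d_j,d_{j+1},\ldots]$. $\Phi(\beta)=\sum_{k\ge 0}\alpha_0(\beta)\cdots\alpha_{k-1}(\beta)\log\frac{1}{\alpha_k(\beta)}$ is the Yoccoz Brjuno function. For $N\ge1$, $\beta^N$ is the number whose digits (indexed from $0$) are $a_0,\ldots,a_n$ in positions $0,\ldots,n$, $N$ in position $n+m$, and $1$ in all other positions. *)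

(* Defs.v *)
From Stdlib Require Import Reals Lra Lia.
From Coquelicot Require Import Coquelicot.
Open Scope R_scope.

(* Finite truncation of the continued fraction
   [d_0, d_1, ...] = 1/(d_0 + 1/(d_1 + ...)) at depth k (tail replaced by 0). *)
Fixpoint cf_fin (d : nat -> nat) (k : nat) : R :=
  match k with
  | O => 0
  | S k' => / (INR (d O) + cf_fin (fun i => d (S i)) k')
  end.

Definition cf_val (d : nat -> nat) : R := real (Lim_seq (fun k => cf_fin d k)).

(* alpha_j(beta) = [d_j, d_{j+1}, ...] where beta = [d_0, d_1, ...]. *)
Definition alpha (d : nat -> nat) (j : nat) : R := cf_val (fun i => d (j + i)%nat).

Fixpoint alpha_prod (d : nat -> nat) (k : nat) : R :=
  match k with
  | O => 1
  | S k' => alpha_prod d k' * alpha d k'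
  end.

Definition Phi (d : nat -> nat) : Rbar :=
  Lim_seq (sum_n (fun k => alpha_prod d k * ln (/ alpha d k))).

(* Digits of beta^N: a_0..a_n at positions 0..n, N at position n+m, 1 elsewhere. *)
Definition beta_digits (a : nat -> nat) (n m N : nat) (i : nat) : nat :=
  if (i <=? n)%nat then a i
  else if Nat.eqb i (n + m)%nat then N else 1%nat.

(* Main.v *)
Require Import Defs.
From Stdlib Require Import Reals Lra Lia.
From Coquelicot Require Import Coquelicot.
Open Scope R_scope.

Lemma INR_ge1 (k : nat) : (1 <= k)%nat -> 1 <= INR k.
Proof. intro H. apply (le_INR 1 k) in H. simpl in H. lra. Qed.

Lemma cf_fin_01 : forall k d, (forall i, (1 <= d i)%nat) -> 0 <= cf_fin d k <= 1.
Proof.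
  induction k as [|k IH]; intros d Hd; simpl.
  - lra.
  - assert (H1 := INR_ge1 _ (Hd O)).
    destruct (IH (fun i => d (S i))) as [A B]; [intro; apply Hd|].
    split.
    + left; apply Rinv_0_lt_compat; lra.
    + rewrite <- Rinv_1. apply Rinv_le_contravar; lra.
Qed.

Lemma cf_fin_S_bounds k d : (forall i, (1 <= d i)%nat) ->
  / (INR (d O) + 1) <= cf_fin d (S k) <= / INR (d O).
Proof.
  intro Hd. simpl.
  assert (H1 := INR_ge1 _ (Hd O)).
  destruct (cf_fin_01 k (fun i => d (S i))) as [A B]; [intro; apply Hd|].
  split; apply Rinv_le_contravar; lra.
Qed.

Lemma cf_val_bounds d : (forall i, (1 <= d i)%nat) ->
  / (INR (d O) + 1) <= cf_val d <= / INR (d O).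
Proof.
  intro Hd. unfold cf_val.
  assert (L1 : Rbar_le (Lim_seq (fun _ => / (INR (d O) + 1))) (Lim_seq (fun k => cf_fin d k))).
  { apply Lim_seq_le_loc. exists 1%nat. intros k Hk. destruct k; [lia|].
    apply cf_fin_S_bounds; auto. }
  assert (L2 : Rbar_le (Lim_seq (fun k => cf_fin d k)) (Lim_seq (fun _ => / INR (d O)))).
  { apply Lim_seq_le_loc. exists 1%nat. intros k Hk. destruct k; [lia|].
    apply cf_fin_S_bounds; auto. }
  rewrite Lim_seq_const in L1, L2.
  destruct (Lim_seq (fun k => cf_fin d k)); simpl in *; try contradiction. lra.
Qed.

Lemma alpha_bounds d j : (forall i, (1 <= d i)%nat) ->
  / (INR (d j) + 1) <= alpha d j <= / INR (d j).
Proof.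
  intro Hd. unfold alpha.
  pose proof (cf_val_bounds (fun i => d (j + i)%nat) (fun i => Hd _)) as H.
  simpl in H. rewrite Nat.add_0_r in H. exact H.
Qed.

Lemma alpha_pos d j : (forall i, (1 <= d i)%nat) -> 0 < alpha d j <= 1.
Proof.
  intro Hd. destruct (alpha_bounds d j Hd) as [A B].
  assert (H1 := INR_ge1 _ (Hd j)).
  split.
  - eapply Rlt_le_trans; [|exact A]. apply Rinv_0_lt_compat; lra.
  - eapply Rle_trans; [exact B|]. rewrite <- Rinv_1. apply Rinv_le_contravar; lra.
Qed.

Lemma alpha_prod_nonneg d k : (forall i, (1 <= d i)%nat) -> 0 <= alpha_prod d k.
Proof.
  intro Hd. induction k; simpl; [lra|].
  destruct (alpha_pos d k Hd). apply Rmult_le_pos; lra.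
Qed.

Lemma term_nonneg d k : (forall i, (1 <= d i)%nat) ->
  0 <= alpha_prod d k * ln (/ alpha d k).
Proof.
  intro Hd. apply Rmult_le_pos; [apply alpha_prod_nonneg; auto|].
  destruct (alpha_pos d k Hd) as [A B].
  rewrite <- ln_1. apply ln_le; [lra|].
  rewrite <- Rinv_1. apply Rinv_le_contravar; lra.
Qed.

Lemma sum_nonneg (f : nat -> R) : (forall k, 0 <= f k) -> forall n, 0 <= sum_n f n.
Proof.
  intros Hf n. induction n.
  - rewrite sum_O. apply Hf.
  - rewrite sum_Sn. unfold plus; simpl. specialize (Hf (S n)). lra.
Qed.

Lemma sum_ge_term (f : nat -> R) : (forall k, 0 <= f k) ->
  forall K n, (K <= n)%nat -> f K <= sum_n f n.
Proof.
  intros Hf K n. induction n; intro H.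
  - assert (K = O) by lia. subst. rewrite sum_O. lra.
  - rewrite sum_Sn. unfold plus; simpl.
    destruct (Nat.eq_dec K (S n)) as [->|Hne].
    + pose proof (sum_nonneg f Hf n). lra.
    + assert (K <= n)%nat by lia. specialize (IHn H0). specialize (Hf (S n)). lra.
Qed.

Fixpoint prod_lower (e : nat -> nat) (k : nat) : R :=
  match k with
  | O => 1
  | S k' => prod_lower e k' * / (INR (e k') + 1)
  end.

Lemma prod_lower_pos e k : 0 < prod_lower e k.
Proof.
  induction k; simpl; [lra|]. apply Rmult_lt_0_compat; auto.
  apply Rinv_0_lt_compat. pose proof (pos_INR (e k)). lra.
Qed.

Theorem mainTheorem10 (a : nat -> nat) (n m : nat)
  (Ha : forall i, (i <= n)%nat -> (0 < a i)%nat) (Hm : (1 <= m)%nat) :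
  forall M : R, exists N0 : nat, forall N : nat, (N0 <= N)%nat ->
    Rbar_lt (Finite M) (Phi (beta_digits a n m N)).
Proof.
  intro M.
  set (e := beta_digits a n m 0).
  set (c := prod_lower e (n + m)).
  assert (Hc : 0 < c) by apply prod_lower_pos.
  destruct (nfloor_ex (exp (M / c))) as [n0 Hn0]; [left; apply exp_pos|].
  exists (S n0). intros N HN.
  set (d := beta_digits a n m N).
  assert (Hd : forall i, (1 <= d i)%nat).
  { intro i. unfold d, beta_digits.
    destruct (i <=? n)%nat eqn:E1. { apply Nat.leb_le in E1. apply Ha; auto. }
    destruct (Nat.eqb i (n + m)); lia. }
  assert (Hde : forall j, (j < n + m)%nat -> d j = e j).
  { intros j Hj. unfold d, e, beta_digits.
    destruct (j <=? n)%nat; auto.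
    destruct (Nat.eqb j (n + m)) eqn:E; auto. apply Nat.eqb_eq in E. lia. }
  assert (HdK : d (n + m)%nat = N).
  { unfold d, beta_digits.
    destruct ((n + m) <=? n)%nat eqn:E1. { apply Nat.leb_le in E1. lia. }
    rewrite Nat.eqb_refl. auto. }
  assert (Hprod : forall k, (k <= n + m)%nat -> prod_lower e k <= alpha_prod d k).
  { induction k; intro Hk; simpl; [lra|].
    apply Rmult_le_compat.
    - left; apply prod_lower_pos.
    - left; apply Rinv_0_lt_compat. pose proof (pos_INR (e k)). lra.
    - apply IHk; lia.
    - rewrite <- Hde by lia. apply alpha_bounds; auto. }
  set (f := fun k => alpha_prod d k * ln (/ alpha d k)).
  assert (Hf : forall k, 0 <= f k) by (intro; apply term_nonneg; auto).
  assert (HN1 : INR (S n0) <= INR N) by (apply le_INR; auto).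
  rewrite S_INR in HN1.
  assert (Hexp : 0 < exp (M / c)) by apply exp_pos.
  assert (Hterm : M < f (n + m)%nat).
  { unfold f.
    destruct (alpha_pos d (n + m) Hd) as [Ap _].
    destruct (alpha_bounds d (n + m) Hd) as [_ Au]. rewrite HdK in Au.
    assert (HNpos : 0 < INR N) by lra.
    assert (Hinv : INR N <= / alpha d (n + m)).
    { rewrite <- (Rinv_inv (INR N)). apply Rinv_le_contravar; auto. }
    assert (Hln : M / c < ln (/ alpha d (n + m))).
    { rewrite <- (ln_exp (M / c)). apply Rlt_le_trans with (ln (INR N)).
      - apply ln_increasing; [exact Hexp|]. lra.
      - apply ln_le; lra. }
    assert (Hp : c <= alpha_prod d (n + m)) by (apply Hprod; lia).
    assert (M = c * (M / c)) by (field; lra).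
    assert (H0 : 0 <= ln (/ alpha d (n + m))).
    { destruct (alpha_pos d (n+m) Hd). rewrite <- ln_1. apply ln_le; [lra|].
      rewrite <- Rinv_1. apply Rinv_le_contravar; lra. }
    assert (c * ln (/ alpha d (n + m)) <= alpha_prod d (n + m) * ln (/ alpha d (n + m)))
      by (apply Rmult_le_compat_r; auto).
    assert (c * (M / c) < c * ln (/ alpha d (n + m))) by (apply Rmult_lt_compat_l; auto).
    lra. }
  unfold Phi. fold f.
  assert (L : Rbar_le (Lim_seq (fun _ => f (n + m)%nat)) (Lim_seq (sum_n f))).
  { apply Lim_seq_le_loc. exists (n + m)%nat. intros k Hk. apply sum_ge_term; auto. }
  rewrite Lim_seq_const in L.
  destruct (Lim_seq (sum_n f)); simpl in *; auto. lra.
Qed.
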